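(* Fix integers $q\ge2$, $\ell\ge1$, $L\ge\ell$, a real $r\in[0,1-\frac{\ell}{L+1})$ and $\varepsilon>0$. There is a function $\delta:\mathbb{N}\to\mathbb{R}$ with $\delta(n)\to0$ as $n\to\infty$ such that, for every $n$ with $rn\in\mathbb{N}$, if there exists an $(r,\ell,L)$ list-recoverable code $C\subseteq[q]^n$ of rate at least $1-r-\varepsilon$ (i.e. $|C|\ge q^{(1-r-\varepsilon)n}$), then $L\ge\frac{\ell r}{\varepsilon}+\ell-1+\delta(n)$.
   Context: $\binom{[q]}{\le\ell}$ is the family of subsets of $[q]=\{1,\dots,q\}$ of size at most $\ell$. The rate of $C\subseteq[q]^n$ is $\log_q(|C|)/n$. $C$ is $(r,\ell,L)$ list-recoverable if for all $S_1,\dots,S_n\in\binom{[q]}{\le\ell}$, at most $L$ codewords $c\in C$ have $c_i\notin S_i$ for at most $rn$ coordinates $i$. *)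

(* Defs.v *)
From HB Require Import structures.
From mathcomp Require Import all_boot all_order all_algebra.
From mathcomp Require Import all_classical all_reals all_analysis.
Set Implicit Arguments. Unset Strict Implicit. Unset Printing Implicit Defensive.
Import Order.TTheory GRing.Theory Num.Theory.
Local Open Scope ring_scope.

(* Words of length n over the alphabet [q], represented as 'I_q
   (i.e. {0,...,q-1}, a relabelling of {1,...,q}). *)
Definition word (q n : nat) := {ffun 'I_n -> 'I_q}.

Definition nagree (q n : nat) (S : 'I_n -> {set 'I_q}) (c : word q n) : nat :=
  #|[set i : 'I_n | c i \notin S i]|.

Definition list_recoverable (R : realType) (q n : nat) (C : {set word q n})
    (r : R) (ell L : nat) : Prop :=
  forall S : 'I_n -> {set 'I_q},
    (forall i, (#|S i| <= ell)%N) ->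
    (#|[set c in C | ((nagree S c)%:R <= r * n%:R)%R]| <= L)%N.

(* Main.v *)
Require Import Defs.
From HB Require Import structures.
From mathcomp Require Import all_boot all_order all_algebra.
From mathcomp Require Import all_classical all_reals all_analysis.
From mathcomp Require Import zify ring lra.
Import Order.TTheory GRing.Theory Num.Theory.

Lemma count_unc n a d p m : (0 < p)%N ->
  (#|[set i : 'I_n | (a <= i) && [exists s : 'I_d, ((i - a)*d + s) %% p == m]]|
     <= ((n - a)*d) %/ p + 1)%N.
Proof.
move=> p0; case: n => [|n'].
  by apply: leq_trans (max_card _) _; rewrite card_ord.
set A := [set i : 'I_n'.+1 | _].
set X := [set x : 'I_((n'.+1 - a)*d) | x %% p == m].
pose g := fun x : 'I_((n'.+1 - a)*d) => (inord (a + x %/ d) : 'I_n'.+1).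
have AX : A \subset g @: X.
  apply/fintype.subsetP => i; rewrite inE => /andP[ai /existsP[s /eqP hs]].
  have d0 : (0 < d)%N by apply: leq_ltn_trans (ltn_ord s).
  have hx : ((i - a) * d + s < (n'.+1 - a) * d)%N.
    have := ltn_ord i; have := ltn_ord s; nia.
  apply/imsetP; exists (Ordinal hx); first by rewrite inE /= hs.
  apply: val_inj; rewrite /g /= divnMDl // divn_small // addn0 subnKC //.
  by rewrite inordK // ltnS -ltnS.
apply: leq_trans (subset_leq_card AX) _.
apply: leq_trans (leq_imset_card _ _) _.
pose k := (((n'.+1 - a) * d) %/ p)%N.
pose h := fun x : 'I_((n'.+1 - a)*d) => (inord (x %/ p) : 'I_k.+1).
rewrite addn1 -[k.+1]card_ord; apply: (@leq_card_in _ _ h).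
move=> x y; rewrite !inE => /eqP hx /eqP hy /(congr1 val) /=.
have lx : (x %/ p <= k)%N by apply: leq_div2r; apply: ltnW.
have ly : (y %/ p <= k)%N by apply: leq_div2r; apply: ltnW.
rewrite !inordK // => e; apply: val_inj.
by rewrite /= (divn_eq x p) (divn_eq y p) e hx hy.
Qed.

Lemma comb (q n ell L K a : nat) (C : {set word q n}) :
  (1 <= ell)%N -> (ell <= L)%N -> (a <= n)%N ->
  (((n - a) * (L.+1 - ell)) %/ L.+1 + 1 <= K)%N ->
  (forall S : 'I_n -> {set 'I_q}, (forall i, #|S i| <= ell)%N ->
      #|[set c in C | nagree S c <= K]| <= L)%N ->
  (#|C| <= L * q ^ a)%N.
Proof.
move=> l1 lL Ha HK LR.
rewrite leqNgt; apply/negP => big.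
pose f := fun c : word q n => ([ffun i => c (widen_ord Ha i)] : {ffun 'I_a -> 'I_q}).
have : [exists y, L < #|[set c in C | f c == y]|]%N.
  rewrite -[X in is_true X]negbK negb_exists; apply/negP => /forallP H.
  move: big; rewrite ltnNge => /negP; apply.
  rewrite -sum1_card (partition_big f predT) //=.
  apply: (@leq_trans (\sum_(y : {ffun 'I_a -> 'I_q}) L)).
    apply: leq_sum => y _; have := H y; rewrite -ltnNge ltnS => Hy.
    apply: leq_trans Hy; rewrite -sum1_card; apply: eq_leq.
    by apply: eq_bigl => c; rewrite inE.
  by rewrite sum_nat_const cardT /= -cardT card_ffun !card_ord mulnC.
case/existsP => y Fy.
set F := [set c in C | f c == y] in Fy.
have [c0 c0F] : exists c0, c0 \in F.
  by apply/card_gt0P; apply: leq_ltn_trans Fy.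
pose s := enum F.
have sz : size s = #|F| by rewrite cardE.
pose t := fun m : 'I_L.+1 => nth c0 s m.
have tinj : injective t.
  move=> m1 m2 /eqP; rewrite /t nth_uniq ?enum_uniq ?sz //.
  - by move/eqP/val_inj.
  - by apply: leq_trans (ltn_ord m1) Fy.
  - by apply: leq_trans (ltn_ord m2) Fy.
have tF m : t m \in F.
  by rewrite -mem_enum mem_nth // sz; apply: leq_trans (ltn_ord m) Fy.
have tC m : t m \in C by have := tF m; rewrite inE => /andP[].
have tpre m (i : 'I_n) : (i < a)%N -> t m i = t ord0 i.
  move=> ia.
  have e1 : f (t m) = f (t ord0).
    have := tF m; have := tF ord0; rewrite !inE => /andP[_ /eqP ->] /andP[_ /eqP ->] //.
  have := congr1 (fun g : {ffun 'I_a -> 'I_q} => g (Ordinal ia)) e1; rewrite /f !ffunE.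
  by have -> : widen_ord Ha (Ordinal ia) = i by apply: val_inj.
set d := (L.+1 - ell)%N.
pose U := fun i : 'I_n => [set m : 'I_L.+1 | [exists s0 : 'I_d, ((i - a)*d + s0) %% L.+1 == m]].
pose S := fun i : 'I_n => if (i < a)%N then [set t ord0 i] else [set t m i | m in ~: U i].
have cardS i : (#|S i| <= ell)%N.
  rewrite /S; case: ifP => _; first by rewrite cards1.
  apply: leq_trans (leq_imset_card _ _) _.
  pose g := fun s0 : 'I_d => (inord (((i - a)*d + s0) %% L.+1) : 'I_L.+1).
  have hm x : (x %% L.+1 <= L)%N by rewrite -ltnS ltn_pmod.
  have ginj : injective g.
    move=> s1 s2 /(congr1 val); rewrite /g /=.
    rewrite (inordK (hm _)) (inordK (hm _)) => /eqP.
    rewrite eqn_modDl (modn_small (leq_trans (ltn_ord s1) (leq_subr _ _))).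
    rewrite (modn_small (leq_trans (ltn_ord s2) (leq_subr _ _))).
    by move/eqP/val_inj.
  have sub : g @: [set: 'I_d] \subset U i.
    apply/fintype.subsetP => m /imsetP[s0 _ ->]; rewrite inE; apply/existsP; exists s0.
    by rewrite /g (inordK (hm _)).
  have := subset_leq_card sub; rewrite card_imset // cardsT card_ord => dU.
  have e := cardsC (U i); rewrite card_ord in e.
  rewrite -(addKn #|U i| #|~: U i|) e; apply: leq_trans (leq_sub2l _ dU) _.
  by rewrite /d subKn // ltnW.
have := LR S cardS.
apply/negP; rewrite -ltnNge.
have sub : t @: [set: 'I_L.+1] \subset [set c in C | nagree S c <= K].
  apply/fintype.subsetP => c /imsetP[m _ ->]; rewrite inE tC /=.
  apply: leq_trans HK.
  have p0 : (0 < L.+1)%N by []. rewrite /nagree.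
  apply: leq_trans (count_unc n a (L.+1 - ell) L.+1 m p0).
  apply: subset_leq_card; apply/fintype.subsetP => i; rewrite !inE.
  rewrite /S; case: ifP => ia.
    by rewrite inE tpre // eqxx.
  move=> hn; rewrite leqNgt ia /=.
  have : m \in U i.
    apply: contraNT hn => hm; apply/imsetP; exists m => //; by rewrite inE.
  by rewrite inE.
by have := subset_leq_card sub; rewrite card_imset // cardsT card_ord.
Qed.

Local Open Scope classical_set_scope.
Local Open Scope ring_scope.

Theorem corollary5p2 (R : realType) (q ell L : nat) (r eps : R) :
  (2 <= q)%N -> (1 <= ell)%N -> (ell <= L)%N ->
  0 <= r -> r < 1 - ell%:R / (L.+1)%:R -> 0 < eps ->
  exists delta : nat -> R,
    delta n @[n --> \oo] --> (0 : R^o) /\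
    forall n : nat,
      (exists k : nat, r * n%:R = k%:R) ->
      (exists C : {set word q n},
          list_recoverable C r ell L /\
          q%:R `^ ((1 - r - eps) * n%:R) <= #|C|%:R) ->
      ell%:R * r / eps + ell%:R - 1 + delta n <= L%:R.
Proof.
move=> hq hl hL hr0 hr1 he.
set P : R := (L.+1)%:R.
set d := (L.+1 - ell)%N.
have hd0 : (0 < d)%N by rewrite /d subn_gt0 ltnS.
set D : R := d%:R.
have PD : P - D = ell%:R by rewrite /D /d natrB ?(leqW hL) // /P opprB addrC subrK.
have P0 : 0 < P by rewrite /P ltr0n.
have D1 : 1 <= D by rewrite /D ler1n.
have hrP : r * P < D.
  have h : r * P < (1 - ell%:R / P) * P by rewrite ltr_pM2r.
  by move: h; rewrite mulrBl mul1r divfK ?gt_eqF // -PD; lra.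
set c := r * ell%:R - eps * D.
have [c0|cpos] := lerP c 0.
  exists (fun _ => 0); split.
    move=> A /= hA; apply: filterS (nbhs_infty_ge 0%N) => n _ /=; exact: nbhs_singleton hA.
  move=> n _ _; rewrite addr0.
  have : ell%:R * r / eps <= D.
    by rewrite ler_pdivrMr //; rewrite /c in c0; lra.
  rewrite -PD /P -natr1; lra.
have rpos : 0 < r.
  rewrite /c in cpos; have : 0 < eps * D by apply: mulr_gt0 => //; lra.
  move=> h; have : 0 < r * ell%:R by lra.
  by rewrite pmulr_lgt0 // ltr0n.
set X := P + D + L%:R * D.
set T := X / c + 1 / r.
have X0 : 0 <= X by rewrite /X; apply: addr_ge0; [lra|apply: mulr_ge0; [exact: ler0n|lra]].
exists (fun n => if T <= n%:R then 0 else - (ell%:R * r / eps + ell%:R)).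
split.
  move=> A /= hA; apply: filterS (nbhs_infty_ger T) => n /= ->; exact: nbhs_singleton hA.
move=> n [K hK] [C [LRc hC]].
case: ifP => hT; last by lra.
exfalso.
have hn1 : 1 <= r * n%:R.
  have : 1 / r <= n%:R.
    apply: le_trans hT; rewrite /T lerDr; apply: divr_ge0 => //; lra.
  by rewrite ler_pdivrMr // mulrC.
have hn2 : X <= n%:R * c.
  have : X / c <= n%:R.
    apply: le_trans hT; rewrite /T lerDl; apply: divr_ge0 => //; lra.
  by rewrite ler_pdivrMr.
have K1 : (1 <= K)%N by rewrite -(ler_nat R) -hK.
set b := (((K - 1) * L.+1) %/ d)%N.
have K1R : K%:R - 1 = (K - 1)%:R :> R by rewrite natrB.
have hb1 : (b * d <= (K - 1) * L.+1)%N by apply: leq_trunc_div.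
have hb2 : ((K - 1) * L.+1 < b.+1 * d)%N by apply: ltn_ceil.
have hb1R : b%:R * D <= (K%:R - 1) * P.
  by rewrite /D /P K1R -!natrM ler_nat.
have hb2R : (K%:R - 1) * P < (b%:R + 1) * D.
  by rewrite /D /P K1R natr1 -!natrM ltr_nat.
have bn : (b <= n)%N.
  rewrite -(ler_nat R).
  have : b%:R * D <= n%:R * D.
    apply: le_trans hb1R _.
    have : r * n%:R * P <= n%:R * D.
      rewrite mulrAC mulrC; apply: ler_wpM2l; [exact: ler0n | lra].
    rewrite hK => h; apply: le_trans h; rewrite ler_pM2r //; lra.
  by rewrite ler_pM2r //; lra.
set a := (n - b)%N.
have ha : (a <= n)%N by apply: leq_subr.
have Hcomb : (#|C| <= L * q ^ a)%N.
  apply: (@comb q n ell L K a C) => //.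
    have e : (n - a = b)%N by rewrite /a subKn.
    rewrite e; apply: (@leq_trans ((K - 1) + 1)%N); last by rewrite subnK.
    rewrite leq_add2r; apply: leq_trans (leq_div2r _ hb1) _; by rewrite mulnK.
  move=> S HS; have := LRc S HS.
  have -> : [set c in C | ((nagree S c)%:R <= r * n%:R)%R] =
            [set c in C | (nagree S c <= K)%N] by apply/setP => x; rewrite !inE hK ler_nat.
  done.
have HcR : (#|C|%:R : R) <= L%:R * q%:R ^+ a by rewrite -natrX -natrM ler_nat.
have aR : a%:R = n%:R - b%:R :> R by rewrite /a natrB.
set Y := (1 - r - eps) * n%:R - a%:R.
have hY : L%:R < Y.
  have : L%:R * D < Y * D.
    rewrite /Y aR; rewrite -hK in hb2R; rewrite /c -PD in hn2; rewrite /X in hn2.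
    lra.
  by rewrite ltr_pM2r //; lra.
have q1 : (1 : R) <= q%:R by rewrite ler1n; apply: leq_trans hq.
have qa0 : 0 < q%:R `^ a%:R :> R by apply: powR_gt0; lra.
have e : (1 - r - eps) * n%:R = Y + a%:R by rewrite /Y subrK.
have qn0 : q%:R != 0 :> R by rewrite pnatr_eq0 -lt0n; apply: leq_trans hq.
have hC' : q%:R `^ ((1 - r - eps) * n%:R) = q%:R `^ Y * q%:R `^ a%:R.
  by rewrite e powRD // qn0 implybT.
move: hC; rewrite hC'.
have hqY : q%:R ^+ L <= q%:R `^ Y.
  by rewrite -powR_mulrn; [apply: ler_powR => //; lra | lra].
have hLq : (L%:R : R) < q%:R ^+ L by rewrite -natrX ltr_nat ltn_expl.
rewrite powR_mulrn in qa0 *; last lra.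
move=> h.
have : L%:R * q%:R ^+ a < q%:R `^ Y * q%:R ^+ a.
  rewrite ltr_pM2r //; lra.
lra.
Qed.
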